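(* Let $(G,\eta\colon M\otimes G\to G)$ be an initial algebra of the endofunctor $M\otimes-$ on $\mathsf{SquaMS}$, let $Q=C(G)$ be its Cauchy completion, and let $\gamma\colon Q\to M\otimes Q$ be the composite of $C(\eta^{-1})\colon C(G)\to C(M\otimes G)$ with the canonical isometric isomorphism $C(M\otimes G)\cong M\otimes C(G)$. Then the metric space $Q$ is bilipschitz equivalent to the Sierpinski carpet $\mathbb{S}$, viewed as a subset of the plane with the taxicab metric, and thus also with the Euclidean metric.
   Context: Let $M_0=\{(r,s)\in[0,1]^2: r\in\{0,1\}\text{ or } s\in\{0,1\}\}$ be the boundary of the unit square. A square metric space is a pair $(X,S_X)$ where $X$ is a metric space with all distances at most $2$ and $S_X\colon M_0\to X$ is injective, such that (sq1) for $i\in\{0,1\}$ and $r,s\in[0,1]$, $d_X(S_X(i,r),S_X(i,s))=|s-r|$ and $d_X(S_X(r,i),S_X(s,i))=|s-r|$; (sq2) for all $(r,s),(t,u)\in M_0$, $d_X(S_X(r,s),S_X(t,u))\ge |r-t|+|s-u|$. $\mathsf{SquaMS}$ is the category of square metric spaces whose morphisms are short (non-expanding) maps $f\colon X\to Y$ with $f\circ S_X=S_Y$. Let $N=\{0,1,2\}^2$ and $M=N\setminus\{(1,1)\}$, elements viewed also as points of $\mathbb{R}^2$. For $X$ in $\mathsf{SquaMS}$, let $\sim$ be the equivalence relation on $M\times X$ generated by $(m,S_X(p))\sim(n,S_X(q))$ whenever $m,n\in M$ differ by exactly $1$ in exactly one coordinate and $(m+p)/3=(n+q)/3$ in $\mathbb{R}^2$.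 Then $M\otimes X=(M\times X)/\!\sim$, with $m\otimes x$ the class of $(m,x)$. On $M\times X$ put $d((a,u),(b,v))=\frac13 d_X(u,v)$ if $a=b$ and $2$ otherwise; the metric on $M\otimes X$ is the quotient metric: $d(m\otimes x,n\otimes y)$ is the infimum, over finite sequences $(m,x)=z_0,z_1,\dots,z_k=(n,y)$ in $M\times X$, of the sum over consecutive pairs of $0$ if the pair is $\sim$-related and of $d(z_i,z_{i+1})$ otherwise. $S_{M\otimes X}(p)=m\otimes S_X(3p-m)$ for any $m\in M$ with $p\in (m+[0,1]^2)/3$, and for a morphism $f$, $(M\otimes f)(m\otimes x)=m\otimes f(x)$; this defines an endofunctor $M\otimes-$ of $\mathsf{SquaMS}$. Cauchy completion $C(X)$: Cauchy sequences modulo equivalence, $d((x_i),(y_i))=\lim d_X(x_i,y_i)$, with $S_{C(X)}(p)$ the class of the constant sequence $S_X(p)$. The Sierpinski carpet $\mathbb{S}$ is the unique nonempty compact subset $K$ of $[0,1]^2$ with $K=\bigcup_{m\in M}\frac13(m+K)$. Two metric spaces $A,B$ are bilipschitz equivalent if there is a bijection $f\colon A\to B$ and $K\ge1$ with $\frac1K d_A(x,y)\le d_B(f(x),f(y))\le K d_A(x,y)$ for all $x,y$. *)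

(* Defs.v *)
From Stdlib Require Import Reals Lra List Relations ClassicalEpsilon.
From Coquelicot Require Import Coquelicot.
Open Scope R_scope.

Definition is_metric {X : Type} (d : X -> X -> R) : Prop :=
  (forall x y, 0 <= d x y) /\
  (forall x y, d x y = 0 <-> x = y) /\
  (forall x y, d x y = d y x) /\
  (forall x y z, d x z <= d x y + d y z).

Definition bilipschitz {A B : Type} (dA : A -> A -> R) (dB : B -> B -> R) : Prop :=
  exists (f : A -> B) (K : R),
    1 <= K /\
    (forall x y, f x = f y -> x = y) /\ (forall b, exists a, f a = b) /\
    (forall x y, / K * dA x y <= dB (f x) (f y) /\ dB (f x) (f y) <= K * dA x y).

Definition quot {T : Type} (E : T -> T -> Prop) : Type :=
  { P : T -> Prop | exists t, P = E t }.
Definition cls {T : Type} (E : T -> T -> Prop) (t : T) : quot E :=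
  exist _ (E t) (ex_intro _ t eq_refl).
Definition rep {T : Type} {E : T -> T -> Prop} (q : quot E) : T :=
  proj1_sig (constructive_indefinite_description _ (proj2_sig q)).

Definition inM0 (p : R * R) : Prop :=
  0 <= fst p <= 1 /\ 0 <= snd p <= 1 /\
  (fst p = 0 \/ fst p = 1 \/ snd p = 0 \/ snd p = 1).

(* S_X is given as a total map R*R -> X; only its values on M0 matter. *)
Record SqMS := {
  sq_car :> Type;
  sq_d : sq_car -> sq_car -> R;
  sq_S : R * R -> sq_car;
  sq_metric : is_metric sq_d;
  sq_bound : forall x y, sq_d x y <= 2;
  sq_inj : forall p q, inM0 p -> inM0 q -> sq_S p = sq_S q -> p = q;
  sq1 : forall i r s, (i = 0 \/ i = 1) -> 0 <= r <= 1 -> 0 <= s <= 1 ->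
          sq_d (sq_S (i, r)) (sq_S (i, s)) = Rabs (s - r) /\
          sq_d (sq_S (r, i)) (sq_S (s, i)) = Rabs (s - r);
  sq2 : forall p q, inM0 p -> inM0 q ->
          Rabs (fst p - fst q) + Rabs (snd p - snd q) <= sq_d (sq_S p) (sq_S q)
}.

Definition is_mor (X Y : SqMS) (f : X -> Y) : Prop :=
  (forall x y, sq_d Y (f x) (f y) <= sq_d X x y) /\
  (forall p, inM0 p -> f (sq_S X p) = sq_S Y p).

Inductive Mpt := M00 | M01 | M02 | M10 | M12 | M20 | M21 | M22.
Definition mx (m : Mpt) : R :=
  match m with M00 | M01 | M02 => 0 | M10 | M12 => 1 | _ => 2 end.
Definition my (m : Mpt) : R :=
  match m with M00 | M10 | M20 => 0 | M01 | M21 => 1 | _ => 2 end.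

Definition adjacent (m n : Mpt) : Prop :=
  (mx m = mx n /\ Rabs (my m - my n) = 1) \/
  (my m = my n /\ Rabs (mx m - mx n) = 1).

Definition Mpt_eq_dec (a b : Mpt) : {a = b} + {a <> b}.
Proof. decide equality. Defined.

Section Tensor.
Variable X : SqMS.

Definition tgen (z w : Mpt * X) : Prop :=
  adjacent (fst z) (fst w) /\
  exists p q, inM0 p /\ inM0 q /\ snd z = sq_S X p /\ snd w = sq_S X q /\
    (mx (fst z) + fst p) / 3 = (mx (fst w) + fst q) / 3 /\
    (my (fst z) + snd p) / 3 = (my (fst w) + snd q) / 3.

Definition trel : Mpt * X -> Mpt * X -> Prop := clos_refl_sym_trans _ tgen.

Definition pdist (z w : Mpt * X) : R :=
  if Mpt_eq_dec (fst z) (fst w) then sq_d X (snd z) (snd w) / 3 else 2.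

Definition step_cost (z w : Mpt * X) : R :=
  match excluded_middle_informative (trel z w) with
  | left _ => 0 | right _ => pdist z w end.

Fixpoint chain_cost (z : Mpt * X) (l : list (Mpt * X)) : R :=
  match l with nil => 0 | w :: l' => step_cost z w + chain_cost w l' end.

Definition qdist (z w : Mpt * X) : R :=
  real (Glb_Rbar (fun c => exists l, last l z = w /\ c = chain_cost z l)).

Definition tens : Type := quot trel.
Definition tcls (m : Mpt) (x : X) : tens := cls trel (m, x).
Definition tdist (a b : tens) : R := qdist (rep a) (rep b).
End Tensor.

Definition in_sub (m : Mpt) (p : R * R) : Prop :=
  mx m <= 3 * fst p <= mx m + 1 /\ my m <= 3 * snd p <= my m + 1.

(* eta : M (x) X -> X is a morphism of SquaMS, i.e. an (M(x)-)-algebra;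
   S_{M(x)X}(p) = m (x) S_X(3p - m) for any m with p in (m+[0,1]^2)/3 *)
Definition is_alg (X : SqMS) (eta : tens X -> X) : Prop :=
  (forall a b, sq_d X (eta a) (eta b) <= tdist X a b) /\
  (forall p m, inM0 p -> in_sub m p ->
     eta (tcls X m (sq_S X (3 * fst p - mx m, 3 * snd p - my m))) = sq_S X p).

(* algebra morphism f : (X,eta) -> (Y,etaY): f o eta = etaY o (M (x) f),
   where (M (x) f)(m (x) x) = m (x) f(x) *)
Definition is_alg_mor (X Y : SqMS) (eta : tens X -> X) (etaY : tens Y -> Y)
  (f : X -> Y) : Prop :=
  is_mor X Y f /\ forall m x, f (eta (tcls X m x)) = etaY (tcls Y m (f x)).

Definition is_initial_algebra (G : SqMS) (eta : tens G -> G) : Prop :=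
  is_alg G eta /\
  forall (Y : SqMS) (etaY : tens Y -> Y), is_alg Y etaY ->
    exists f : G -> Y, is_alg_mor G Y eta etaY f /\
      forall g : G -> Y, is_alg_mor G Y eta etaY g -> forall x, g x = f x.

Section Completion.
Variable X : SqMS.
Definition cauchy (s : nat -> X) : Prop :=
  forall eps, 0 < eps -> exists N, forall i j, (N <= i)%nat -> (N <= j)%nat ->
    sq_d X (s i) (s j) < eps.
Definition CSeq : Type := { s : nat -> X | cauchy s }.
Definition cequiv (s t : CSeq) : Prop :=
  is_lim_seq (fun i => sq_d X (proj1_sig s i) (proj1_sig t i)) 0.
Definition compl : Type := quot cequiv.
Definition cdist (a b : compl) : R :=
  real (Lim_seq (fun i => sq_d X (proj1_sig (rep a) i) (proj1_sig (rep b) i))).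
End Completion.

Definition eucl (p q : R * R) : R :=
  sqrt ((fst p - fst q) ^ 2 + (snd p - snd q) ^ 2).
Definition taxi (p q : R * R) : R :=
  Rabs (fst p - fst q) + Rabs (snd p - snd q).
Definition open2 (U : R * R -> Prop) : Prop :=
  forall p, U p -> exists e, 0 < e /\ forall q, eucl p q < e -> U q.
Definition compact2 (K : R * R -> Prop) : Prop :=
  forall (I : Type) (U : I -> R * R -> Prop), (forall i, open2 (U i)) ->
    (forall p, K p -> exists i, U i p) ->
    exists l : list I, forall p, K p -> exists i, In i l /\ U i p.
Definition is_carpet (K : R * R -> Prop) : Prop :=
  (forall p, K p -> 0 <= fst p <= 1 /\ 0 <= snd p <= 1) /\
  (exists p, K p) /\ compact2 K /\
  (forall p, K p <-> exists m q, K q /\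
       p = ((mx m + fst q) / 3, (my m + snd q) / 3)).
Definition carpet_taxi (K : R * R -> Prop) (p q : {p | K p}) : R :=
  taxi (proj1_sig p) (proj1_sig q).
Definition carpet_eucl (K : R * R -> Prop) (p q : {p | K p}) : R :=
  eucl (proj1_sig p) (proj1_sig q).

(* Main.v *)
Require Import Defs.
From Stdlib Require Import Reals Lra List Relations ClassicalEpsilon ProofIrrelevance FunctionalExtensionality PropExtensionality Lia.
From Coquelicot Require Import Coquelicot.
Open Scope R_scope.

Lemma cls_rep {T} (E : T -> T -> Prop) (q : quot E) : q = cls E (rep q).
Proof.
  destruct q as [P h]. unfold rep, cls; simpl.
  destruct (constructive_indefinite_description _ h) as [t Ht]; simpl.
  subst P. f_equal. apply proof_irrelevance.
Qed.

Lemma rep_cls {T} (E : T -> T -> Prop) (Er : forall x, E x x) t : E t (rep (cls E t)).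
Proof.
  unfold rep, cls; simpl.
  destruct (constructive_indefinite_description _ _) as [u Hu]; simpl.
  rewrite Hu. apply Er.
Qed.

Lemma cls_eq {T} (E : T -> T -> Prop) (Es : forall x y, E x y -> E y x)
  (Et : forall x y z, E x y -> E y z -> E x z) s t : E s t -> cls E s = cls E t.
Proof.
  intros H. unfold cls.
  assert (HE : E s = E t).
  { apply functional_extensionality; intro u; apply propositional_extensionality; split; eauto. }
  revert HE. generalize (ex_intro (fun t0 : T => E s = E t0) s eq_refl).
  generalize (ex_intro (fun t0 : T => E t = E t0) t eq_refl).
  intros e1 e2 HE. revert e2. rewrite HE. intros. f_equal; apply proof_irrelevance.
Qed.

Section TensGen.
Variable X : SqMS.

Lemma dX_nonneg (x y : X) : 0 <= sq_d X x y.
Proof. apply (proj1 (sq_metric X) x y). Qed.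
Lemma dX_refl (x : X) : sq_d X x x = 0.
Proof. apply (proj1 (proj2 (sq_metric X)) x x). reflexivity. Qed.
Lemma dX_sym (x y : X) : sq_d X x y = sq_d X y x.
Proof. apply (proj1 (proj2 (proj2 (sq_metric X)))). Qed.
Lemma dX_tri (x y z : X) : sq_d X x z <= sq_d X x y + sq_d X y z.
Proof. apply (proj2 (proj2 (proj2 (sq_metric X)))). Qed.
Lemma dX_eq (x y : X) : sq_d X x y = 0 -> x = y.
Proof. apply (proj1 (proj2 (sq_metric X)) x y). Qed.

Lemma trel_refl z : trel X z z.
Proof. apply rst_refl. Qed.
Lemma trel_sym z w : trel X z w -> trel X w z.
Proof. apply rst_sym. Qed.
Lemma trel_trans z w u : trel X z w -> trel X w u -> trel X z u.
Proof. apply rst_trans. Qed.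

Lemma tcls_eq z w : trel X z w -> cls (trel X) z = cls (trel X) w.
Proof. apply cls_eq; [apply trel_sym | apply trel_trans]. Qed.

Lemma trel_rep z : trel X z (rep (cls (trel X) z)).
Proof. apply rep_cls, trel_refl. Qed.

Lemma pdist_nonneg z w : 0 <= pdist X z w.
Proof. unfold pdist. destruct Mpt_eq_dec. pose proof (dX_nonneg (snd z) (snd w)). lra. lra. Qed.

Lemma step_cost_le z w : 0 <= step_cost X z w <= pdist X z w.
Proof. unfold step_cost. destruct excluded_middle_informative; pose proof (pdist_nonneg z w); lra. Qed.

Lemma step_cost_trel z w : trel X z w -> step_cost X z w = 0.
Proof. unfold step_cost. destruct excluded_middle_informative; tauto. Qed.

Lemma chain_cost_nonneg z l : 0 <= chain_cost X z l.
Proof. revert z; induction l; simpl; intros. lra. pose proof (step_cost_le z a). specialize (IHl a). lra. Qed.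

Lemma last_cons {A} (a d : A) l : last (a :: l) d = last l a.
Proof.
  revert a d; induction l as [|b l IH]; intros a d. reflexivity.
  change (last (b::l) d = last (b::l) a). rewrite !IH. reflexivity.
Qed.

Lemma last_app2 {A} (l1 l2 : list A) z : last (l1 ++ l2) z = last l2 (last l1 z).
Proof.
  revert z; induction l1; intros; simpl. reflexivity.
  change (last (a :: (l1 ++ l2)) z = last l2 (last (a :: l1) z)).
  rewrite !last_cons. apply IHl1.
Qed.

Lemma chain_cost_app z l1 l2 :
  chain_cost X z (l1 ++ l2) = chain_cost X z l1 + chain_cost X (last l1 z) l2.
Proof.
  revert z; induction l1; intros. simpl. lra.
  rewrite last_cons. change (step_cost X z a + chain_cost X a (l1 ++ l2) = step_cost X z a + chain_cost X a l1 + chain_cost X (last l1 a) l2).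
  rewrite IHl1. lra.
Qed.

Definition chains z w := fun c => exists l, last l z = w /\ c = chain_cost X z l.

Lemma qdist_spec z w : is_glb_Rbar (chains z w) (Finite (qdist X z w)).
Proof.
  unfold qdist. fold (chains z w).
  assert (HG := Glb_Rbar_correct (chains z w)).
  assert (Hlb : is_lb_Rbar (chains z w) (Finite 0)).
  { intros c [l [_ ->]]. simpl. apply chain_cost_nonneg. }
  assert (Hc : chains z w (chain_cost X z (w :: nil))) by (exists (w :: nil); simpl; auto).
  destruct (Glb_Rbar (chains z w)) eqn:E.
  - exact HG.
  - destruct HG as [H1 _]. specialize (H1 _ Hc). simpl in H1. tauto.
  - destruct HG as [_ H2]. specialize (H2 _ Hlb). simpl in H2. tauto.
Qed.

Lemma qdist_le z w l : last l z = w -> qdist X z w <= chain_cost X z l.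
Proof.
  intros H. destruct (qdist_spec z w) as [H1 _].
  apply (H1 (chain_cost X z l)). exists l; auto.
Qed.

Lemma qdist_ge z w L : (forall l, last l z = w -> L <= chain_cost X z l) -> L <= qdist X z w.
Proof.
  intros H. destruct (qdist_spec z w) as [_ H2].
  apply (H2 (Finite L)). intros c [l [Hl ->]]. simpl. auto.
Qed.

Lemma qdist_nonneg z w : 0 <= qdist X z w.
Proof. apply qdist_ge. intros; apply chain_cost_nonneg. Qed.

Lemma qdist_trel z z' w w' : trel X z z' -> trel X w w' -> qdist X z w <= qdist X z' w'.
Proof.
  intros H1 H2. apply qdist_ge. intros l Hl.
  assert (Hq := qdist_le z w (z' :: l ++ w :: nil)).
  rewrite last_cons, last_last in Hq.
  specialize (Hq eq_refl). simpl in Hq. rewrite chain_cost_app in Hq. simpl in Hq.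
  rewrite Hl in Hq. rewrite (step_cost_trel _ _ H1), (step_cost_trel _ _ (trel_sym _ _ H2)) in Hq.
  lra.
Qed.

Lemma tdist_cls z w : tdist X (cls (trel X) z) (cls (trel X) w) = qdist X z w.
Proof.
  unfold tdist. apply Rle_antisym; apply qdist_trel; try apply trel_rep;
  apply trel_sym, trel_rep.
Qed.

Lemma qdist_same m x y : qdist X (m, x) (m, y) <= sq_d X x y / 3.
Proof.
  eapply Rle_trans. apply (qdist_le _ _ ((m, y) :: nil)); reflexivity.
  simpl. pose proof (step_cost_le (m, x) (m, y)). unfold pdist in H. simpl in H.
  destruct Mpt_eq_dec; [|congruence]. lra.
Qed.

Lemma tdist_same m x y : tdist X (tcls X m x) (tcls X m y) <= sq_d X x y / 3.
Proof. unfold tcls. rewrite tdist_cls. apply qdist_same. Qed.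

Lemma qdist_tri z w u : qdist X z u <= qdist X z w + qdist X w u.
Proof.
  assert (forall l2, last l2 w = u -> qdist X z u - chain_cost X w l2 <= qdist X z w).
  { intros l2 H2. apply qdist_ge. intros l1 H1.
    pose proof (qdist_le z u (l1 ++ l2)). rewrite chain_cost_app, H1 in H.
    assert (last (l1 ++ l2) z = u).
    { rewrite last_app2, H1. auto. }
    specialize (H H0). lra. }
  assert (qdist X z u - qdist X z w <= qdist X w u).
  { apply qdist_ge. intros l Hl. specialize (H l Hl). lra. }
  lra.
Qed.

Lemma chain_lower (D : Mpt * X -> Mpt * X -> R) :
  (forall z, D z z <= 0) -> (forall z w u, D z u <= D z w + D w u) ->
  (forall z w, D z w <= step_cost X z w) -> forall z w, D z w <= qdist X z w.
Proof.
  intros H0 Ht Hs z w. apply qdist_ge. intros l. revert z.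
  induction l; intros z Hl.
  - simpl in *. subst. auto.
  - rewrite last_cons in Hl. simpl. specialize (IHl a Hl).
    specialize (Ht z a w). specialize (Hs z a). lra.
Qed.

End TensGen.

Lemma sig_eq {A} {P : A -> Prop} (x y : sig P) : proj1_sig x = proj1_sig y -> x = y.
Proof. destruct x, y; simpl; intros ->; f_equal; apply proof_irrelevance. Qed.

Definition sub3 (m : Mpt) (p : R * R) : R * R := (3 * fst p - mx m, 3 * snd p - my m).

Ltac solve_M0 :=
  repeat split; try lra;
  first [left; lra | right; left; lra | right; right; left; lra | right; right; right; lra].

Lemma pick_cell p : inM0 p -> exists m, in_sub m p.
Proof.
  destruct p as [a b]; unfold inM0, in_sub; simpl; intros H.
  destruct (Rle_dec (3 * a) 1); [destruct (Rle_dec (3 * b) 1); [exists M00|destruct (Rle_dec (3*b) 2); [exists M01|exists M02]]|].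
  all: try (simpl; lra).
  destruct (Rle_dec (3 * a) 2); [destruct (Rle_dec (3 * b) 1); [exists M10|destruct (Rle_dec (3*b) 2); [exfalso|exists M12]]|].
  all: try (simpl; lra).
  destruct (Rle_dec (3 * b) 1); [exists M20|destruct (Rle_dec (3*b) 2); [exists M21|exists M22]]; simpl; lra.
Qed.

Lemma sub3_M0 m p : inM0 p -> in_sub m p -> inM0 (sub3 m p).
Proof.
  destruct p as [a b]; unfold inM0, in_sub, sub3; simpl; intros H1 H2.
  destruct m; simpl in *; destruct H1 as [? [? [?|[?|[?|?]]]]]; solve_M0.
Qed.

Lemma M0_side i r : (i = 0 \/ i = 1) -> 0 <= r <= 1 -> inM0 (i, r) /\ inM0 (r, i).
Proof. unfold inM0; simpl; intros [-> | ->] H; split; solve_M0. Qed.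

Lemma M0_square p : inM0 p -> 0 <= fst p <= 1 /\ 0 <= snd p <= 1.
Proof. unfold inM0; tauto. Qed.

Lemma M0_00 : inM0 (0, 0).
Proof. unfold inM0; simpl; solve_M0. Qed.

Section Surj.
Variable G : SqMS.
Variable eta : tens G -> G.
Hypothesis Hinit : is_initial_algebra G eta.

Definition Pim (x : G) := exists m z, x = eta (tcls G m z).

Lemma HA : is_alg G eta.
Proof. apply Hinit. Qed.

Lemma Pim_S p : inM0 p -> Pim (sq_S G p).
Proof.
  intros H. destruct (pick_cell p H) as [m Hm].
  exists m, (sq_S G (sub3 m p)). symmetry. apply (proj2 HA); auto.
Qed.

Definition SubT := {x : G | Pim x}.
Definition subS (q : R * R) : SubT :=
  match excluded_middle_informative (inM0 q) with
  | left h => exist _ (sq_S G q) (Pim_S q h)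
  | right _ => exist _ (sq_S G (0,0)) (Pim_S _ M0_00) end.
Lemma subS_val q : inM0 q -> proj1_sig (subS q) = sq_S G q.
Proof. intros h. unfold subS. destruct excluded_middle_informative; simpl; tauto. Qed.
Definition subd (x y : SubT) := sq_d G (proj1_sig x) (proj1_sig y).

Lemma subd_metric : is_metric subd.
Proof.
  unfold subd. split; [|split; [|split]]; intros.
  - apply dX_nonneg.
  - split; intros H. apply sig_eq, dX_eq, H. subst; apply dX_refl.
  - apply dX_sym.
  - apply dX_tri.
Qed.

Lemma subd_bound x y : subd x y <= 2.
Proof. apply sq_bound. Qed.

Lemma subS_inj p q : inM0 p -> inM0 q -> subS p = subS q -> p = q.
Proof.
  intros Hp Hq H. apply (sq_inj G); auto.
  rewrite <- (subS_val p), <- (subS_val q) by auto. congruence.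
Qed.

Lemma subS_sq1 i r s : (i = 0 \/ i = 1) -> 0 <= r <= 1 -> 0 <= s <= 1 ->
  subd (subS (i, r)) (subS (i, s)) = Rabs (s - r) /\
  subd (subS (r, i)) (subS (s, i)) = Rabs (s - r).
Proof.
  intros Hi Hr Hs. destruct (M0_side i r Hi Hr), (M0_side i s Hi Hs).
  unfold subd. rewrite !subS_val by auto. apply (sq1 G); auto.
Qed.

Lemma subS_sq2 p q : inM0 p -> inM0 q ->
  Rabs (fst p - fst q) + Rabs (snd p - snd q) <= subd (subS p) (subS q).
Proof. intros. unfold subd. rewrite !subS_val by auto. apply (sq2 G); auto. Qed.

Definition SubX : SqMS := Build_SqMS SubT subd subS subd_metric subd_bound subS_inj subS_sq1 subS_sq2.

Definition i2 (z : Mpt * SubX) : Mpt * G := (fst z, proj1_sig (snd z)).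

Lemma tgen_map z w : tgen SubX z w -> tgen G (i2 z) (i2 w).
Proof.
  destruct z as [m x], w as [n y].
  intros [Ha [p [q [Hp [Hq [Hz [Hw [H1 H2]]]]]]]]. simpl in *.
  split; auto. exists p, q. unfold i2; simpl. rewrite Hz, Hw.
  rewrite !subS_val by auto. tauto.
Qed.

Lemma trel_map z w : trel SubX z w -> trel G (i2 z) (i2 w).
Proof.
  induction 1.
  - apply rst_step, tgen_map; auto.
  - apply trel_refl.
  - apply trel_sym; auto.
  - eapply trel_trans; eauto.
Qed.

Lemma step_cost_map z w : step_cost G (i2 z) (i2 w) <= step_cost SubX z w.
Proof.
  unfold step_cost at 2. destruct excluded_middle_informative as [h|h].
  - rewrite step_cost_trel by (apply trel_map; auto). lra.
  - pose proof (step_cost_le G (i2 z) (i2 w)). unfold pdist, i2 in *; simpl in *. exact (proj2 H).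
Qed.

Lemma qdist_map z w : qdist G (i2 z) (i2 w) <= qdist SubX z w.
Proof.
  apply (chain_lower SubX (fun z w => qdist G (i2 z) (i2 w))).
  - intros. apply (qdist_le G _ _ nil). reflexivity.
  - intros. apply qdist_tri.
  - intros. eapply Rle_trans. apply (qdist_le G _ _ (i2 w0 :: nil)). reflexivity.
    simpl. pose proof (step_cost_map z0 w0). lra.
Qed.

Definition etaS (a : tens SubX) : SubX :=
  exist _ (eta (cls (trel G) (i2 (rep a)))) (ex_intro _ (fst (rep a)) (ex_intro _ (proj1_sig (snd (rep a))) eq_refl)).

Lemma etaS_alg : is_alg SubX etaS.
Proof.
  split.
  - intros a b. simpl. unfold subd, etaS; simpl.
    eapply Rle_trans. apply (proj1 HA).
    rewrite tdist_cls. apply qdist_map.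
  - intros p m Hp Hm. apply sig_eq.
    assert (Hu := sub3_M0 m p Hp Hm).
    pose proof (trel_map _ _ (trel_rep SubX (m, subS (sub3 m p)))) as Ht.
    pose proof (tcls_eq G _ _ Ht) as E.
    change (eta (cls (trel G) (i2 (rep (cls (trel SubX) (m, subS (sub3 m p)))))) = proj1_sig (subS p)).
    rewrite <- E. rewrite subS_val by auto. unfold i2. simpl fst. simpl snd.
    rewrite subS_val by auto. apply (proj2 HA); auto.
Qed.

Lemma eta_surj (x : G) : exists m z, x = eta (tcls G m z).
Proof.
  destruct (proj2 Hinit SubX etaS etaS_alg) as [f [[[Hs HS] Hc] _]].
  destruct (proj2 Hinit G eta HA) as [f0 [_ Hu]].
  assert (H1 : is_alg_mor G G eta eta (fun x => proj1_sig (f x))).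
  { split; [split|].
    - intros; apply Hs.
    - intros p Hp. rewrite HS by auto. apply subS_val; auto.
    - intros m y. rewrite Hc. unfold etaS; simpl. f_equal.
      symmetry. apply (tcls_eq G). apply (trel_map _ _ (trel_rep SubX (m, f y))). }
  assert (H2 : is_alg_mor G G eta eta (fun x => x)).
  { split; [split|]; intros; auto. apply Req_le, eq_refl. }
  assert (E : proj1_sig (f x) = x).
  { rewrite (Hu _ H1), (Hu _ H2). reflexivity. }
  rewrite <- E. apply (proj2_sig (f x)).
Qed.

End Surj.

Ltac rabs := unfold Rabs in *; repeat destruct Rcase_abs; try lra.

Lemma taxi_nonneg p q : 0 <= taxi p q.
Proof. unfold taxi. pose proof (Rabs_pos (fst p - fst q)); pose proof (Rabs_pos (snd p - snd q)); lra. Qed.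
Lemma taxi_sym p q : taxi p q = taxi q p.
Proof. unfold taxi. rewrite (Rabs_minus_sym (fst p)), (Rabs_minus_sym (snd p)). reflexivity. Qed.
Lemma taxi_tri p q r : taxi p r <= taxi p q + taxi q r.
Proof.
  unfold taxi.
  pose proof (Rabs_triang (fst p - fst q) (fst q - fst r)).
  pose proof (Rabs_triang (snd p - snd q) (snd q - snd r)).
  replace (fst p - fst r) with ((fst p - fst q) + (fst q - fst r)) by ring.
  replace (snd p - snd r) with ((snd p - snd q) + (snd q - snd r)) by ring. lra.
Qed.
Lemma taxi_refl p : taxi p p = 0.
Proof. unfold taxi. rewrite !Rminus_diag, Rabs_R0. lra. Qed.
Lemma taxi_eq p q : taxi p q = 0 -> p = q.
Proof.
  destruct p as [a b], q as [c d]; unfold taxi; simpl; intros H.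
  pose proof (Rabs_pos (a - c)); pose proof (Rabs_pos (b - d)).
  assert (Rabs (a - c) = 0) by lra. assert (Rabs (b - d) = 0) by lra.
  f_equal; rabs.
Qed.
Lemma taxi_fst p q : Rabs (fst p - fst q) <= taxi p q.
Proof. unfold taxi. pose proof (Rabs_pos (snd p - snd q)). lra. Qed.
Lemma taxi_snd p q : Rabs (snd p - snd q) <= taxi p q.
Proof. unfold taxi. pose proof (Rabs_pos (fst p - fst q)). lra. Qed.

Definition sq (p : R * R) := 0 <= fst p <= 1 /\ 0 <= snd p <= 1.
Lemma taxi_sq p q : sq p -> sq q -> taxi p q <= 2.
Proof. unfold sq, taxi. intros. rabs. Qed.

Lemma eucl_le_taxi p q : eucl p q <= taxi p q.
Proof.
  unfold eucl, taxi. set (a := fst p - fst q). set (b := snd p - snd q).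
  rewrite <- (sqrt_pow2 (Rabs a + Rabs b)) by (pose proof (Rabs_pos a); pose proof (Rabs_pos b); lra).
  apply sqrt_le_1_alt.
  assert (Rabs a * Rabs a = a * a) by (rabs; nra).
  assert (Rabs b * Rabs b = b * b) by (rabs; nra).
  pose proof (Rabs_pos a); pose proof (Rabs_pos b). simpl. nra.
Qed.

Lemma abs_le_eucl a b : Rabs a <= sqrt (a ^ 2 + b ^ 2).
Proof.
  rewrite <- sqrt_Rsqr_abs. apply sqrt_le_1_alt. unfold Rsqr. simpl. nra.
Qed.

Lemma taxi_le_eucl p q : taxi p q <= 2 * eucl p q.
Proof.
  unfold eucl, taxi. pose proof (abs_le_eucl (fst p - fst q) (snd p - snd q)).
  pose proof (abs_le_eucl (snd p - snd q) (fst p - fst q)).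
  rewrite Rplus_comm in H0. lra.
Qed.

Lemma INR_lt_pow3 n : INR n < 3 ^ n.
Proof.
  induction n. simpl; lra. rewrite S_INR. simpl.
  assert (1 <= 3 ^ n) by (apply pow_R1_Rle; lra). lra.
Qed.

Lemma pow3_pos n : 0 < 3 ^ n.
Proof. apply pow_lt; lra. Qed.

Lemma pow3_small C eps : 0 < eps -> exists n, C / 3 ^ n < eps.
Proof.
  intros He. destruct (INR_archimed eps C He) as [n Hn]. exists n.
  pose proof (INR_lt_pow3 n). pose proof (pow3_pos n).
  apply (Rmult_lt_reg_r (3 ^ n)); auto. unfold Rdiv. rewrite Rmult_assoc, Rinv_l by lra. nra.
Qed.

Definition psi (m : Mpt) (q : R * R) : R * R := ((mx m + fst q) / 3, (my m + snd q) / 3).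

Lemma psi_sub3 m p : psi m (sub3 m p) = p.
Proof. destruct p; unfold psi, sub3; simpl; f_equal; field. Qed.
Lemma sub3_psi m p : sub3 m (psi m p) = p.
Proof. destruct p; unfold psi, sub3; simpl; f_equal; field. Qed.
Lemma psi_sq m q : sq q -> sq (psi m q).
Proof. unfold sq, psi; destruct m; simpl; intros; lra. Qed.
Lemma taxi_psi m p q : taxi (psi m p) (psi m q) = taxi p q / 3.
Proof. unfold taxi, psi; simpl. rabs. Qed.
Lemma psi_in_sub m q : sq q -> in_sub m (psi m q).
Proof. unfold sq, in_sub, psi; simpl; intros; lra. Qed.

Lemma psi_M0 m a : sq a -> inM0 (psi m a) -> inM0 a.
Proof.
  destruct a as [a1 a2]; unfold sq, inM0, psi; simpl; intros H1 H2.
  destruct m; simpl in *; destruct H2 as [? [? [?|[?|[?|?]]]]]; solve_M0.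
Qed.

Lemma cells_M0 m m' a a' : m <> m' -> sq a -> sq a' -> psi m a = psi m' a' -> inM0 a /\ inM0 a'.
Proof.
  destruct a as [a1 a2], a' as [b1 b2]; unfold sq, inM0, psi; simpl; intros Hm H1 H2 E.
  injection E; intros E2 E1.
  destruct m, m'; try congruence; simpl in *; split; solve_M0.
Qed.

Lemma psi_inj m a b : psi m a = psi m b -> a = b.
Proof.
  destruct a, b; unfold psi; simpl; intros E; injection E; intros. f_equal; lra.
Qed.

Section Carpet.
Variable K : R * R -> Prop.
Hypothesis HK : is_carpet K.

Lemma K_sq p : K p -> sq p.
Proof. apply HK. Qed.

Lemma K_psi m q : K q -> K (psi m q).
Proof. intros H. apply (proj2 (proj2 (proj2 HK))). exists m, q. auto. Qed.

Lemma K_dec p : K p -> exists m q, K q /\ p = psi m q.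
Proof. intros H. apply (proj2 (proj2 (proj2 HK))) in H. exact H. Qed.

Lemma K_closed b : (forall eps, 0 < eps -> exists q, K q /\ taxi q b < eps) -> K b.
Proof.
  intros H. destruct (classic (K b)) as [|Hnb]; auto. exfalso.
  destruct HK as [_ [_ [Hc _]]].
  destruct (Hc nat (fun n q => / INR (S n) < taxi q b)) as [l Hl].
  - intros n p Hp. exists ((taxi p b - / INR (S n)) / 2). split. lra.
    intros q Hq. pose proof (taxi_le_eucl p q). pose proof (taxi_tri p q b). lra.
  - intros p Hp. assert (Hpos : 0 < taxi p b).
    { destruct (Rle_lt_or_eq_dec 0 (taxi p b) (taxi_nonneg p b)) as [|E]; auto.
      symmetry in E. apply taxi_eq in E. subst. exfalso; exact (Hnb Hp). }
    destruct (INR_archimed (taxi p b) 1 Hpos) as [n Hn]. exists n.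
    rewrite S_INR. pose proof (pos_INR n).
    apply (Rmult_lt_reg_r (INR n + 1)). lra. rewrite Rinv_l by lra. nra.
  - set (N := list_max l).
    assert (HN : forall i, In i l -> (i <= N)%nat).
    { intros i Hi. assert (HH := proj1 (list_max_le l N) (le_n _)).
      rewrite Forall_forall in HH. auto. }
    assert (Hp : 0 < / INR (S N)) by (apply Rinv_0_lt_compat, lt_0_INR; lia).
    destruct (H _ Hp) as [q [Hq Hqb]].
    destruct (Hl q Hq) as [i [Hi Hiq]].
    assert (/ INR (S N) <= / INR (S i)).
    { apply Rinv_le_contravar. apply lt_0_INR; lia. apply le_INR. specialize (HN i Hi). lia. }
    lra.
Qed.

Lemma K_nonempty : exists p, K p.
Proof. apply HK. Qed.

Lemma M0_approx n : forall b, inM0 b -> exists q, K q /\ taxi q b <= 2 / 3 ^ n.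
Proof.
  induction n; intros b Hb.
  - destruct K_nonempty as [q Hq]. exists q. split; auto. simpl.
    replace (2 / 1) with 2 by field. apply taxi_sq. apply K_sq; auto. apply M0_square; auto.
  - destruct (pick_cell b Hb) as [m Hm].
    destruct (IHn (sub3 m b) (sub3_M0 m b Hb Hm)) as [q [Hq Hqb]].
    exists (psi m q). split. apply K_psi; auto.
    rewrite <- (psi_sub3 m b). rewrite taxi_psi. simpl.
    pose proof (pow3_pos n). unfold Rdiv in *. rewrite Rinv_mult. nra.
Qed.

Lemma M0_K b : inM0 b -> K b.
Proof.
  intros Hb. apply K_closed. intros eps He.
  destruct (pow3_small 2 eps He) as [n Hn].
  destruct (M0_approx n b Hb) as [q [Hq Hqb]]. exists q. split; auto. lra.
Qed.

Definition CT := {p | K p}.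
Definition Kd (x y : CT) := taxi (proj1_sig x) (proj1_sig y).
Definition KS (q : R * R) : CT :=
  match excluded_middle_informative (K q) with
  | left h => exist _ q h
  | right _ => exist _ (0,0) (M0_K _ M0_00) end.
Lemma KS_val q : K q -> proj1_sig (KS q) = q.
Proof. intros h. unfold KS. destruct excluded_middle_informative; simpl; tauto. Qed.

Lemma Kd_metric : is_metric Kd.
Proof.
  unfold Kd. split; [|split; [|split]]; intros.
  - apply taxi_nonneg.
  - split; intros H. apply sig_eq, taxi_eq, H. subst; apply taxi_refl.
  - apply taxi_sym.
  - apply taxi_tri.
Qed.
Lemma Kd_bound x y : Kd x y <= 2.
Proof. unfold Kd. apply taxi_sq; apply K_sq; apply proj2_sig. Qed.
Lemma KS_inj p q : inM0 p -> inM0 q -> KS p = KS q -> p = q.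
Proof.
  intros Hp Hq H. rewrite <- (KS_val p), <- (KS_val q) by (apply M0_K; auto). congruence.
Qed.
Lemma KS_sq1 i r s : (i = 0 \/ i = 1) -> 0 <= r <= 1 -> 0 <= s <= 1 ->
  Kd (KS (i, r)) (KS (i, s)) = Rabs (s - r) /\
  Kd (KS (r, i)) (KS (s, i)) = Rabs (s - r).
Proof.
  intros Hi Hr Hs. destruct (M0_side i r Hi Hr), (M0_side i s Hi Hs).
  unfold Kd. rewrite !KS_val by (apply M0_K; auto). unfold taxi; simpl.
  rewrite !Rminus_diag, Rabs_R0, (Rabs_minus_sym r). split; lra.
Qed.
Lemma KS_sq2 p q : inM0 p -> inM0 q ->
  Rabs (fst p - fst q) + Rabs (snd p - snd q) <= Kd (KS p) (KS q).
Proof. intros. unfold Kd. rewrite !KS_val by (apply M0_K; auto). apply Rle_refl. Qed.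

Definition CX : SqMS := Build_SqMS CT Kd KS Kd_metric Kd_bound KS_inj KS_sq1 KS_sq2.

Definition Psi (z : Mpt * CX) : R * R := psi (fst z) (proj1_sig (snd z)).

Lemma Psi_tgen z w : tgen CX z w -> Psi z = Psi w.
Proof.
  destruct z as [m x], w as [n y].
  intros [Ha [p [q [Hp [Hq [Hz [Hw [H1 H2]]]]]]]]. simpl in *.
  unfold Psi, psi; simpl. rewrite Hz, Hw. simpl.
  rewrite !KS_val by (apply M0_K; auto). f_equal; auto.
Qed.

Lemma Psi_trel z w : trel CX z w -> Psi z = Psi w.
Proof. induction 1; try congruence. apply Psi_tgen; auto. Qed.

Lemma Psi_sq z : sq (Psi z).
Proof. unfold Psi. apply psi_sq, K_sq, proj2_sig. Qed.

Definition etaK (a : tens CX) : CX :=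
  exist _ (Psi (rep a)) (K_psi _ _ (proj2_sig (snd (rep a)))).

Lemma etaK_alg : is_alg CX etaK.
Proof.
  split.
  - intros a b. simpl. unfold Kd, etaK; simpl. unfold tdist.
    apply (chain_lower CX (fun z w => taxi (Psi z) (Psi w))).
    + intros. rewrite taxi_refl. lra.
    + intros. apply taxi_tri.
    + intros z w. unfold step_cost. destruct excluded_middle_informative as [h|h].
      * rewrite (Psi_trel _ _ h), taxi_refl. lra.
      * unfold pdist. destruct Mpt_eq_dec as [e|e].
        -- unfold Psi. rewrite e, taxi_psi. simpl. unfold Kd. lra.
        -- apply taxi_sq; apply Psi_sq.
  - intros p m Hp Hm. apply sig_eq.
    change (Psi (rep (cls (trel CX) (m, KS (sub3 m p)))) = proj1_sig (KS p)).
    rewrite <- (Psi_trel _ _ (trel_rep CX (m, KS (sub3 m p)))).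
    unfold Psi; simpl. rewrite !KS_val by (apply M0_K; auto using sub3_M0).
    apply psi_sub3.
Qed.

Variable G : SqMS.
Variable eta : tens G -> G.
Hypothesis Hinit : is_initial_algebra G eta.

Definition fK : G -> CX := proj1_sig (constructive_indefinite_description _ (proj2 Hinit CX etaK etaK_alg)).
Lemma fK_mor : is_alg_mor G CX eta etaK fK.
Proof.
  unfold fK. destruct (constructive_indefinite_description _ _) as [f Hf]. simpl. exact (proj1 Hf).
Qed.

Definition g (x : G) : R * R := proj1_sig (fK x).

Lemma g_short x y : taxi (g x) (g y) <= sq_d G x y.
Proof. apply (proj1 (proj1 fK_mor)). Qed.
Lemma g_S p : inM0 p -> g (sq_S G p) = p.
Proof. intros Hp. unfold g. rewrite (proj2 (proj1 fK_mor)) by auto. apply KS_val, M0_K; auto. Qed.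
Lemma g_K x : K (g x).
Proof. apply (proj2_sig (fK x)). Qed.
Lemma g_sq x : sq (g x).
Proof. apply K_sq, g_K. Qed.
Lemma g_eta m x : g (eta (tcls G m x)) = psi m (g x).
Proof.
  unfold g. rewrite (proj2 fK_mor).
  change (Psi (rep (cls (trel CX) (m, fK x))) = psi m (proj1_sig (fK x))).
  rewrite <- (Psi_trel _ _ (trel_rep CX (m, fK x))). reflexivity.
Qed.

Fixpoint Ew (w : list Mpt) (z : G) : G :=
  match w with nil => z | m :: w' => eta (tcls G m (Ew w' z)) end.
Fixpoint phi (w : list Mpt) (a : R * R) : R * R :=
  match w with nil => a | m :: w' => psi m (phi w' a) end.

Lemma g_Ew w z : g (Ew w z) = phi w (g z).
Proof. induction w; simpl; auto. rewrite g_eta, IHw. reflexivity. Qed.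

Lemma phi_sq w a : sq a -> sq (phi w a).
Proof. induction w; simpl; auto. intros; apply psi_sq; auto. Qed.

Lemma Ew_short w z1 z2 : sq_d G (Ew w z1) (Ew w z2) <= sq_d G z1 z2 / 3 ^ length w.
Proof.
  induction w; simpl. lra.
  eapply Rle_trans. apply (proj1 (HA G eta Hinit)).
  eapply Rle_trans. apply tdist_same.
  pose proof (pow3_pos (length w)).
  replace (sq_d G z1 z2 / (3 * 3 ^ length w)) with ((sq_d G z1 z2 / 3 ^ length w) / 3) by (field; lra).
  lra.
Qed.

Lemma lemB w u : inM0 u -> inM0 (phi w u) -> Ew w (sq_S G u) = sq_S G (phi w u).
Proof.
  induction w; simpl; intros Hu Hp; auto.
  assert (Ha : sq (phi w u)) by (apply phi_sq, M0_square; auto).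
  assert (Ha0 := psi_M0 _ _ Ha Hp).
  rewrite IHw by auto.
  rewrite <- (sub3_psi a (phi w u)) at 1.
  apply (proj2 (HA G eta Hinit)); auto. apply psi_in_sub; auto.
Qed.

Lemma tgen_of m n u v : adjacent m n -> inM0 u -> inM0 v -> psi m u = psi n v ->
  tgen G (m, sq_S G u) (n, sq_S G v).
Proof.
  intros Ha Hu Hv E. split; simpl; auto. exists u, v.
  unfold psi in E. injection E; intros.
  split; [exact Hu|split; [exact Hv|split; [reflexivity|split; [reflexivity|split; assumption]]]].
Qed.

Ltac adj := unfold adjacent; simpl; first [left; split; [lra| rabs] | right; split; [lra| rabs]].

Ltac via c :=
  match goal with |- trel G (?m, sq_S G ?u) _ =>
    eapply rst_trans with (y := (c, sq_S G (sub3 c (psi m u))));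
    [ apply rst_step; apply tgen_of;
      [ adj | auto | unfold sub3, psi, inM0; simpl; solve_M0 | rewrite psi_sub3; auto ]
    | apply rst_step; apply tgen_of;
      [ adj | unfold sub3, psi, inM0; simpl; solve_M0 | auto | rewrite psi_sub3; auto ] ]
  end.

Lemma lemC m m' u u' : m <> m' -> inM0 u -> inM0 u' -> psi m u = psi m' u' ->
  trel G (m, sq_S G u) (m', sq_S G u').
Proof.
  intros Hm Hu Hu' E.
  assert (E' := E).
  destruct u as [a1 a2], u' as [b1 b2].
  destruct (M0_square _ Hu) as [Ha1 Ha2], (M0_square _ Hu') as [Hb1 Hb2]. simpl in *.
  unfold psi in E'; simpl in E'. injection E'; intros E2 E1.
  destruct m, m'; try congruence; simpl in E1, E2;
  try (exfalso; lra);
  first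
  [ apply rst_step; apply tgen_of; [adj | auto | auto | auto]
  | solve [via M00] | solve [via M02] | solve [via M20] | solve [via M22] ].
Qed.

Lemma lemA w : forall w' u u', inM0 u -> inM0 u' -> phi w u = phi w' u' ->
  Ew w (sq_S G u) = Ew w' (sq_S G u').
Proof.
  induction w as [|m w IH]; intros w' u u' Hu Hu' E.
  - simpl in E |- *. rewrite (lemB w' u'); auto; rewrite <- E; auto.
  - destruct w' as [|m' w'].
    + simpl in E. rewrite (lemB (m :: w) u); auto; simpl; rewrite E; auto.
    + simpl in E |- *. destruct (Mpt_eq_dec m m') as [e|n].
      * subst. apply psi_inj in E. rewrite (IH w' u u') by auto. reflexivity.
      * destruct (cells_M0 m m' _ _ n (phi_sq w u (M0_square u Hu)) (phi_sq w' u' (M0_square u' Hu')) E) as [H1 H2].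
        rewrite (lemB w u), (lemB w' u') by auto. f_equal. apply tcls_eq. apply lemC; auto.
Qed.

Lemma decomp k : forall x, exists w z, length w = k /\ x = Ew w z.
Proof.
  induction k; intros x. exists nil, x; auto.
  destruct (eta_surj G eta Hinit x) as [m [z0 ->]].
  destruct (IHk z0) as [w [z [Hl ->]]]. exists (m :: w), z. simpl; auto.
Qed.

Definition mxn (m : Mpt) : nat := match m with M00 | M01 | M02 => 0 | M10 | M12 => 1 | _ => 2 end.
Definition myn (m : Mpt) : nat := match m with M00 | M10 | M20 => 0 | M01 | M21 => 1 | _ => 2 end.
Fixpoint Ix (w : list Mpt) : nat := match w with nil => 0%nat | m :: w' => (mxn m * 3 ^ length w' + Ix w')%nat end.
Fixpoint Iy (w : list Mpt) : nat := match w with nil => 0%nat | m :: w' => (myn m * 3 ^ length w' + Iy w')%nat end.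
Lemma mx_INR m : mx m = INR (mxn m).
Proof. destruct m; simpl; lra. Qed.
Lemma my_INR m : my m = INR (myn m).
Proof. destruct m; simpl; lra. Qed.
Lemma INR3 : INR 3 = 3.
Proof. simpl; lra. Qed.

Lemma phi_fst w a : fst (phi w a) = (INR (Ix w) + fst a) / 3 ^ length w.
Proof.
  induction w as [|m w IH]. simpl. field.
  change (fst (psi m (phi w a)) = (INR (mxn m * 3 ^ length w + Ix w) + fst a) / (3 * 3 ^ length w)).
  unfold psi. cbn [fst]. rewrite IH, plus_INR, mult_INR, pow_INR, INR3, mx_INR.
  pose proof (pow3_pos (length w)). field. lra.
Qed.
Lemma phi_snd w a : snd (phi w a) = (INR (Iy w) + snd a) / 3 ^ length w.
Proof.
  induction w as [|m w IH]. simpl. field.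
  change (snd (psi m (phi w a)) = (INR (myn m * 3 ^ length w + Iy w) + snd a) / (3 * 3 ^ length w)).
  unfold psi. cbn [snd]. rewrite IH, plus_INR, mult_INR, pow_INR, INR3, my_INR.
  pose proof (pow3_pos (length w)). field. lra.
Qed.

Lemma scale_lt X Y n : 0 < n -> Rabs (X / n - Y / n) < / n -> -1 < X - Y < 1.
Proof.
  intros Hn H. apply Rabs_def2 in H.
  assert (E1 : X / n - Y / n = (X - Y) * / n) by (field; lra).
  rewrite E1 in H. assert (E2 : / n * n = 1) by (field; lra).
  set (s := / n) in *. assert (0 < s) by (unfold s; apply Rinv_0_lt_compat; lra).
  destruct H. split; nra.
Qed.

Lemma nat_close (I I' : nat) (a b : R) : -1 < INR I + a - (INR I' + b) < 1 -> 0 <= a <= 1 -> 0 <= b <= 1 ->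
  (I <= I' + 1 /\ I' <= I + 1)%nat.
Proof.
  intros H Ha Hb.
  assert (INR I < INR (I' + 2)) by (rewrite plus_INR; simpl; lra).
  assert (INR I' < INR (I + 2)) by (rewrite plus_INR; simpl; lra).
  apply INR_lt in H0. apply INR_lt in H1. lia.
Qed.

Lemma INR01 n : (n = 0 \/ n = 1)%nat -> INR n = 0 \/ INR n = 1.
Proof. intros [-> | ->]; simpl; auto. Qed.

Lemma lemD k x y : taxi (g x) (g y) < / 3 ^ k -> sq_d G x y <= 4 / 3 ^ k.
Proof.
  intros Ht.
  destruct (decomp k x) as [w [z [Hw ->]]], (decomp k y) as [w' [z' [Hw' ->]]].
  rewrite !g_Ew in Ht.
  assert (Ha := g_sq z). assert (Hb := g_sq z').
  set (a := g z) in *. set (b := g z') in *.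
  assert (Hn := pow3_pos k).
  assert (H1 := Rle_lt_trans _ _ _ (taxi_fst (phi w a) (phi w' b)) Ht).
  assert (H2 := Rle_lt_trans _ _ _ (taxi_snd (phi w a) (phi w' b)) Ht).
  rewrite !phi_fst, Hw, Hw' in H1. rewrite !phi_snd, Hw, Hw' in H2.
  apply scale_lt in H1; auto. apply scale_lt in H2; auto.
  destruct Ha as [Ha1 Ha2], Hb as [Hb1 Hb2].
  destruct (nat_close (Ix w) (Ix w') (fst a) (fst b) H1 Ha1 Hb1) as [Hx1 Hx2].
  destruct (nat_close (Iy w) (Iy w') (snd a) (snd b) H2 Ha2 Hb2) as [Hy1 Hy2].
  set (Mx := Nat.max (Ix w) (Ix w')). set (My := Nat.max (Iy w) (Iy w')).
  set (u := (INR (Mx - Ix w), INR (My - Iy w))).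
  set (u' := (INR (Mx - Ix w'), INR (My - Iy w'))).
  assert (Hu : inM0 u).
  { unfold u, inM0; simpl.
    assert (Hx : INR (Mx - Ix w) = 0 \/ INR (Mx - Ix w) = 1) by (apply INR01; unfold Mx; lia).
    assert (Hy : INR (My - Iy w) = 0 \/ INR (My - Iy w) = 1) by (apply INR01; unfold My; lia).
    destruct Hx as [-> | ->], Hy as [-> | ->]; solve_M0. }
  assert (Hu' : inM0 u').
  { unfold u', inM0; simpl.
    assert (Hx : INR (Mx - Ix w') = 0 \/ INR (Mx - Ix w') = 1) by (apply INR01; unfold Mx; lia).
    assert (Hy : INR (My - Iy w') = 0 \/ INR (My - Iy w') = 1) by (apply INR01; unfold My; lia).
    destruct Hx as [-> | ->], Hy as [-> | ->]; solve_M0. }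
  assert (Hp : phi w u = phi w' u').
  { rewrite (surjective_pairing (phi w u)), (surjective_pairing (phi w' u')).
    rewrite !phi_fst, !phi_snd, Hw, Hw'. unfold u, u'; simpl.
    rewrite <- !plus_INR. f_equal; f_equal; f_equal; unfold Mx, My; lia. }
  assert (E := lemA w w' u u' Hu Hu' Hp).
  eapply Rle_trans. apply (dX_tri G _ (Ew w (sq_S G u))).
  rewrite E.
  assert (Q1 := Ew_short w z (sq_S G u)). assert (Q2 := Ew_short w' (sq_S G u') z').
  rewrite Hw in Q1. rewrite Hw' in Q2.
  assert (sq_d G z (sq_S G u) / 3 ^ k <= 2 / 3 ^ k).
  { unfold Rdiv. apply Rmult_le_compat_r. left; apply Rinv_0_lt_compat; auto. apply sq_bound. }
  assert (sq_d G (sq_S G u') z' / 3 ^ k <= 2 / 3 ^ k).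
  { unfold Rdiv. apply Rmult_le_compat_r. left; apply Rinv_0_lt_compat; auto. apply sq_bound. }
  rewrite E in Q1. unfold Rdiv in *. lra.
Qed.

Lemma find_k t N : / 3 ^ N <= t -> t < 1 -> exists k, / 3 ^ S k <= t /\ t < / 3 ^ k.
Proof.
  induction N; intros H1 H2. simpl in H1. rewrite Rinv_1 in H1. lra.
  destruct (Rlt_le_dec t (/ 3 ^ N)). exists N; auto. apply IHN; auto.
Qed.

Lemma lemE x y : sq_d G x y <= 12 * taxi (g x) (g y).
Proof.
  set (t := taxi (g x) (g y)). assert (Ht : 0 <= t) by apply taxi_nonneg.
  assert (Hb := sq_bound G x y). assert (Hd := dX_nonneg G x y).
  destruct (Rle_lt_dec 1 t). lra.
  destruct (Rle_lt_or_eq_dec 0 t Ht) as [Hp | H0].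
  - destruct (pow3_small 1 t Hp) as [N HN].
    destruct (find_k t N) as [k [Hk1 Hk2]]. unfold Rdiv in HN; lra. auto.
    assert (Q := lemD k x y Hk2).
    simpl in Hk1. rewrite Rinv_mult in Hk1. lra.
  - destruct (Rle_lt_or_eq_dec 0 _ Hd) as [Hdp | Hd0]; [|lra].
    destruct (pow3_small 4 _ Hdp) as [k Hk].
    assert (Q := lemD k x y). fold t in Q. rewrite <- H0 in Q.
    assert (0 < / 3 ^ k) by (apply Rinv_0_lt_compat, pow3_pos). lra.
Qed.

Lemma lim_real u : ex_finite_lim_seq u -> is_lim_seq u (real (Lim_seq u)).
Proof.
  intros [l Hl]. rewrite (is_lim_seq_unique _ _ Hl). simpl. exact Hl.
Qed.

Lemma lim_near (u v e : nat -> R) (l : R) : is_lim_seq u l -> is_lim_seq e 0 ->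
  (forall n, Rabs (v n - u n) <= e n) -> is_lim_seq v l.
Proof.
  intros Hu He Hb.
  assert (H1 := is_lim_seq_minus' _ _ _ _ Hu He). assert (H2 := is_lim_seq_plus' _ _ _ _ Hu He).
  rewrite Rminus_0_r in H1. rewrite Rplus_0_r in H2.
  apply (is_lim_seq_le_le (fun n => u n - e n) v (fun n => u n + e n)); auto.
  intros n. specialize (Hb n). rabs.
Qed.

Lemma lim_pow3 C : is_lim_seq (fun n => C / 3 ^ n) 0.
Proof.
  apply is_lim_seq_spec. intros eps.
  destruct (pow3_small (Rabs C) eps (cond_pos eps)) as [N HN]. exists N. intros n Hn.
  rewrite Rminus_0_r. unfold Rdiv. rewrite Rabs_mult, Rabs_inv, (Rabs_right (3 ^ n)) by (left; apply pow3_pos).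
  assert (3 ^ N <= 3 ^ n) by (apply Rle_pow; lra || lia).
  assert (/ 3 ^ n <= / 3 ^ N) by (apply Rinv_le_contravar; auto; apply pow3_pos).
  pose proof (Rabs_pos C). unfold Rdiv in HN. nra.
Qed.

Definition gx (s : CSeq G) n := fst (g (proj1_sig s n)).
Definition gy (s : CSeq G) n := snd (g (proj1_sig s n)).

Lemma gx_cauchy s : ex_finite_lim_seq (gx s).
Proof.
  apply ex_lim_seq_cauchy_corr. intros eps.
  destruct (proj2_sig s eps (cond_pos eps)) as [N HN]. exists N. intros n m Hn Hm.
  unfold gx. eapply Rle_lt_trans. apply taxi_fst. eapply Rle_lt_trans. apply g_short. auto.
Qed.
Lemma gy_cauchy s : ex_finite_lim_seq (gy s).
Proof.
  apply ex_lim_seq_cauchy_corr. intros eps.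
  destruct (proj2_sig s eps (cond_pos eps)) as [N HN]. exists N. intros n m Hn Hm.
  unfold gy. eapply Rle_lt_trans. apply taxi_snd. eapply Rle_lt_trans. apply g_short. auto.
Qed.

Definition Ls (s : CSeq G) : R * R := (real (Lim_seq (gx s)), real (Lim_seq (gy s))).
Lemma Ls_x s : is_lim_seq (gx s) (fst (Ls s)).
Proof. apply lim_real, gx_cauchy. Qed.
Lemma Ls_y s : is_lim_seq (gy s) (snd (Ls s)).
Proof. apply lim_real, gy_cauchy. Qed.

Lemma Ls_K s : K (Ls s).
Proof.
  apply K_closed. intros eps He.
  assert (He2 : 0 < eps / 2) by lra.
  assert (H1 := proj2 (is_lim_seq_spec _ _) (Ls_x s) (mkposreal _ He2)).
  assert (H2 := proj2 (is_lim_seq_spec _ _) (Ls_y s) (mkposreal _ He2)).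
  destruct H1 as [N1 H1], H2 as [N2 H2]. simpl pos in H1, H2.
  exists (g (proj1_sig s (Nat.max N1 N2))). split. apply g_K.
  specialize (H1 (Nat.max N1 N2) ltac:(lia)). specialize (H2 (Nat.max N1 N2) ltac:(lia)).
  unfold gx, gy in *. unfold taxi. lra.
Qed.

Definition dseq (s t : CSeq G) n := sq_d G (proj1_sig s n) (proj1_sig t n).

Lemma dseq_cauchy s t : ex_finite_lim_seq (dseq s t).
Proof.
  apply ex_lim_seq_cauchy_corr. intros eps.
  assert (He2 : 0 < eps / 2) by (pose proof (cond_pos eps); lra).
  destruct (proj2_sig s _ He2) as [N1 H1], (proj2_sig t _ He2) as [N2 H2].
  exists (Nat.max N1 N2). intros n m Hn Hm.
  specialize (H1 n m ltac:(lia) ltac:(lia)). specialize (H2 n m ltac:(lia) ltac:(lia)).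
  unfold dseq. set (a := proj1_sig s n) in *. set (b := proj1_sig t n) in *.
  set (a' := proj1_sig s m) in *. set (b' := proj1_sig t m) in *.
  pose proof (dX_tri G a a' b). pose proof (dX_tri G a' b' b).
  pose proof (dX_tri G a' a b'). pose proof (dX_tri G a b b').
  rewrite (dX_sym G b' b) in *. rewrite (dX_sym G a' a) in *. rabs.
Qed.

Lemma dseq_lim s t : is_lim_seq (dseq s t) (real (Lim_seq (dseq s t))).
Proof. apply lim_real, dseq_cauchy. Qed.

Lemma taxi_lim s t : is_lim_seq (fun n => taxi (g (proj1_sig s n)) (g (proj1_sig t n))) (taxi (Ls s) (Ls t)).
Proof.
  unfold taxi.
  assert (A1 := is_lim_seq_abs _ _ (is_lim_seq_minus' _ _ _ _ (Ls_x s) (Ls_x t))).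
  assert (A2 := is_lim_seq_abs _ _ (is_lim_seq_minus' _ _ _ _ (Ls_y s) (Ls_y t))).
  simpl in A1, A2. exact (is_lim_seq_plus' _ _ _ _ A1 A2).
Qed.

Lemma key_bounds s t : taxi (Ls s) (Ls t) <= real (Lim_seq (dseq s t)) <= 12 * taxi (Ls s) (Ls t).
Proof.
  split.
  - assert (H := is_lim_seq_le _ _ _ _ (fun n => g_short (proj1_sig s n) (proj1_sig t n)) (taxi_lim s t) (dseq_lim s t)).
    exact H.
  - assert (H12 := is_lim_seq_scal_l _ 12 _ (taxi_lim s t)).
    assert (H := is_lim_seq_le _ _ _ _ (fun n => lemE (proj1_sig s n) (proj1_sig t n)) (dseq_lim s t) H12).
    exact H.
Qed.

Lemma cequiv_refl s : cequiv G s s.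
Proof.
  unfold cequiv. eapply is_lim_seq_ext; [|apply is_lim_seq_const].
  intros; simpl. symmetry; apply dX_refl.
Qed.
Lemma cequiv_sym s t : cequiv G s t -> cequiv G t s.
Proof.
  unfold cequiv. apply is_lim_seq_ext. intros; apply dX_sym.
Qed.
Lemma cequiv_trans s t u : cequiv G s t -> cequiv G t u -> cequiv G s u.
Proof.
  unfold cequiv. intros H1 H2.
  assert (H := is_lim_seq_plus' _ _ _ _ H1 H2). rewrite Rplus_0_r in H.
  apply (is_lim_seq_le_le (fun _ => 0) (fun i => sq_d G (proj1_sig s i) (proj1_sig u i)) (fun n => sq_d G (proj1_sig s n) (proj1_sig t n) + sq_d G (proj1_sig t n) (proj1_sig u n)) 0).
  intros n. split. apply dX_nonneg. apply dX_tri.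
  apply is_lim_seq_const. exact H.
Qed.

Definition FF (a : compl G) : CT := exist _ (Ls (rep a)) (Ls_K (rep a)).

Lemma cdist_FF a b : taxi (proj1_sig (FF a)) (proj1_sig (FF b)) <= cdist G a b <= 12 * taxi (proj1_sig (FF a)) (proj1_sig (FF b)).
Proof. apply key_bounds. Qed.

Lemma FF_inj a b : FF a = FF b -> a = b.
Proof.
  intros E. assert (E1 : Ls (rep a) = Ls (rep b)) by (apply (f_equal (@proj1_sig _ _)) in E; exact E).
  assert (Hb := key_bounds (rep a) (rep b)). rewrite E1, taxi_refl in Hb.
  assert (Hc : cequiv G (rep a) (rep b)).
  { unfold cequiv. assert (H := dseq_lim (rep a) (rep b)).
    replace (real (Lim_seq (dseq (rep a) (rep b)))) with 0 in H by lra. exact H. }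
  rewrite (cls_rep _ a), (cls_rep _ b). apply cls_eq; [exact cequiv_sym | exact cequiv_trans | exact Hc].
Qed.

Definition dec_pt (q : CT) : {m : Mpt & {q' : CT | proj1_sig q = psi m (proj1_sig q')}}.
Proof.
  destruct q as [p Hp].
  destruct (constructive_indefinite_description _ (K_dec p Hp)) as [m Hm].
  destruct (constructive_indefinite_description _ Hm) as [q0 [Hq0 E]].
  exists m. exists (exist _ q0 Hq0). simpl. exact E.
Defined.

Fixpoint Xs (n : nat) (q : CT) : G :=
  match n with
  | O => sq_S G (0, 0)
  | S n' => match dec_pt q with existT m r => eta (tcls G m (Xs n' (proj1_sig r))) end
  end.

Lemma Xs_close n : forall q, taxi (g (Xs n q)) (proj1_sig q) <= 2 / 3 ^ n.
Proof.
  induction n; intros q.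
  - simpl. rewrite g_S by apply M0_00. replace (2 / 1) with 2 by field.
    apply taxi_sq. unfold sq; simpl; lra. apply K_sq, proj2_sig.
  - simpl. destruct (dec_pt q) as [m [r Hr]]. simpl. rewrite g_eta, Hr, taxi_psi.
    specialize (IHn r). pose proof (pow3_pos n).
    replace (2 / (3 * 3 ^ n)) with ((2 / 3 ^ n) / 3) by (field; lra). lra.
Qed.

Lemma pow3_mono_inv C i N : 0 <= C -> (N <= i)%nat -> C / 3 ^ i <= C / 3 ^ N.
Proof.
  intros HC Hi. unfold Rdiv. apply Rmult_le_compat_l; auto.
  apply Rinv_le_contravar. apply pow3_pos. apply Rle_pow; lra || lia.
Qed.

Lemma Xs_cauchy q : Defs.cauchy G (fun n => Xs n q).
Proof.
  intros eps He. destruct (pow3_small 48 eps He) as [N HN]. exists N. intros i j Hi Hj.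
  eapply Rle_lt_trans. apply lemE.
  assert (T := taxi_tri (g (Xs i q)) (proj1_sig q) (g (Xs j q))).
  rewrite (taxi_sym (proj1_sig q)) in T.
  pose proof (Xs_close i q). pose proof (Xs_close j q).
  pose proof (pow3_mono_inv 2 i N ltac:(lra) Hi). pose proof (pow3_mono_inv 2 j N ltac:(lra) Hj).
  assert (48 / 3 ^ N = 24 * (2 / 3 ^ N)) by (unfold Rdiv; ring). lra.
Qed.

Lemma FF_surj b : exists a, FF a = b.
Proof.
  set (s := exist _ (fun n => Xs n b) (Xs_cauchy b) : CSeq G).
  exists (cls (cequiv G) s). apply sig_eq. simpl proj1_sig at 2.
  set (t := rep (cls (cequiv G) s)).
  assert (Hst : cequiv G s t) by (apply rep_cls, cequiv_refl).
  assert (Hx : is_lim_seq (gx s) (fst (proj1_sig b))).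
  { apply (lim_near (fun _ => fst (proj1_sig b)) _ (fun n => 2 / 3 ^ n)).
    apply is_lim_seq_const. apply lim_pow3.
    intros n. unfold gx. simpl. eapply Rle_trans; [apply taxi_fst|apply Xs_close]. }
  assert (Hy : is_lim_seq (gy s) (snd (proj1_sig b))).
  { apply (lim_near (fun _ => snd (proj1_sig b)) _ (fun n => 2 / 3 ^ n)).
    apply is_lim_seq_const. apply lim_pow3.
    intros n. unfold gy. simpl. eapply Rle_trans; [apply taxi_snd|apply Xs_close]. }
  assert (Hx' : is_lim_seq (gx t) (fst (proj1_sig b))).
  { apply (lim_near (gx s) _ (dseq s t)); auto.
    intros n. unfold gx, dseq. rewrite dX_sym. eapply Rle_trans; [apply taxi_fst|apply g_short]. }
  assert (Hy' : is_lim_seq (gy t) (snd (proj1_sig b))).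
  { apply (lim_near (gy s) _ (dseq s t)); auto.
    intros n. unfold gy, dseq. rewrite dX_sym. eapply Rle_trans; [apply taxi_snd|apply g_short]. }
  unfold FF, Ls. simpl proj1_sig. fold t.
  rewrite (is_lim_seq_unique _ _ Hx'), (is_lim_seq_unique _ _ Hy'). simpl.
  destruct (proj1_sig b); reflexivity.
Qed.

Lemma bl_taxi : bilipschitz (cdist G) (carpet_taxi K).
Proof.
  exists FF, 12. split. lra. split. apply FF_inj. split. apply FF_surj.
  intros a b. unfold carpet_taxi. assert (H := cdist_FF a b).
  assert (0 <= taxi (proj1_sig (FF a)) (proj1_sig (FF b))) by apply taxi_nonneg. split; lra.
Qed.

Lemma bl_eucl : bilipschitz (cdist G) (carpet_eucl K).
Proof.
  exists FF, 24. split. lra. split. apply FF_inj. split. apply FF_surj.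
  intros a b. unfold carpet_eucl. assert (H := cdist_FF a b).
  pose proof (eucl_le_taxi (proj1_sig (FF a)) (proj1_sig (FF b))).
  pose proof (taxi_le_eucl (proj1_sig (FF a)) (proj1_sig (FF b))).
  assert (0 <= taxi (proj1_sig (FF a)) (proj1_sig (FF b))) by apply taxi_nonneg. split; lra.
Qed.

End Carpet.

Theorem mainTheorem1 :
  forall (G : SqMS) (eta : tens G -> G),
    is_initial_algebra G eta ->
    forall K : R * R -> Prop, is_carpet K ->
      bilipschitz (cdist G) (carpet_taxi K) /\
      bilipschitz (cdist G) (carpet_eucl K).
Proof.
  intros G eta Hinit K HK. split.
  - exact (bl_taxi K HK G eta Hinit).
  - exact (bl_eucl K HK G eta Hinit).
Qed.
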